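(* In every configuration reached during a fair execution of Algorithm DLE from a permitted initial configuration, the following hold: (1) for any expanded particle, its head is in $S_e$ and its tail is not in $S_e$; (2) $S_e$ is simply-connected and non-empty; (3) every boundary point of $S_e$ is occupied by a particle; (4) the $eligible$ variables of all particles are consistent, i.e., for every particle $p$ and every port $i\in\{0,\dots,5\}$, $p.eligible[i]=true$ if and only if the point reached via port $i$ of $p$'s head is in $S_e$.
   Context: Geometry. The triangular grid $G$ has as vertices (''points'') the points of the regular triangular lattice in the plane, adjacent iff at unit distance; each point has six incident edges, cyclically ordered clockwise. A shape is a finite set of points (identified with its induced subgraph). For a connected shape $S$: the unbounded face is the outer face; a bounded face containing a grid point not in $S$ is a hole, whose grid points are hole points; the area of $S$ is $S$ together with its hole points; $S$ is simply-connected if it is connected with no holes; the outer boundary is the set of points of $S$ on the boundary of the outer face; a boundary point is a point of $S$ adjacent to a point not in $S$. For a boundary point $v$, a local boundary $B$ of $v$ w.r.t. $S$ is a maximal clockwise cyclic interval of consecutive edges at $v$ leading to points not in $S$, with boundary count $c(v,B)=|B|-2$. $v$ is redundant if its neighbors in $S$ induce a connected subgraph; erodable if redundant and on the outer boundary (then it has a single local boundary $B$); SCE if erodable and $c(v,B)>0$. Model (amoebot, strong scheduler). Anonymous constant-memory particles each occupy one point (contracted) or two adjacent points (expanded; head and tail); no point is occupied twice. Each particle labels the edges at its point by ports $0,\dots,5$; all share clockwise chirality, and a particle knows the port a neighbor uses for their common edge. Particles read and write neighbors' memories. A contracted particle may expand into an adjacent unoccupied point (its new head); an expanded one may contract into either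 of its points; handovers allowed. An execution is a sequence of atomic activations of single particles; in an activation a particle reads neighbors' memories, computes, writes memories, and performs at most one movement. A fair execution activates every particle infinitely often. A permitted initial configuration $C_0$: all particles contracted, at least one particle, set $S_P(C_0)$ of occupied points connected. Input: each particle knows, for each port $i$, whether the point via port $i$ lies in the outer face of $S_P(C_0)$. Algorithm DLE. It maintains a set $S_e$ of eligible points, initially the area of $S_P(C_0)$; points are only removed. Each particle $p$ has $status\in\{undecided,leader,follower\}$ (initially $undecided$) and $eligible[0..5]$ (initially $eligible[i]$ true iff the point via port $i$ is not in the outer face of $S_P(C_0)$). On activation: (a) if $p$ is expanded, it contracts into its head; (b) else if $p$ and all its neighbors have status $\ne undecided$, $p$ terminates; (c) else if $p.status=undecided$ ($p$ contracted at $v$): if by its $eligible$ array no neighbor of $v$ is in $S_e$, it sets $status:=leader$; else if $v$ is SCE w.r.t. $S_e$, then $v$ is removed from $S_e$ and each neighboring particle whose head is adjacent to $v$ sets its $eligible$ entry for $v$ to false; then, if $v$ has an adjacent point $u\in S_e$ not occupied by any particle, $p$ sets its $eligible$ entries to true except the one for the port from $u$ back to $v$ (set false) and expands into $u$; otherwise $p$ sets $status:=follower$. Otherwise $p$ does nothing. *)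

(* Defs.v *)
From Stdlib Require Import ZArith.
From mathcomp Require Import all_boot.

Set Implicit Arguments.
Unset Strict Implicit.
Unset Printing Implicit Defensive.

(* Points of the triangular lattice in axial coordinates:
   (a, b) is the planar point a*e1 + b*e2, e1 = (1,0), e2 = (1/2, sqrt3/2). *)
Definition pt : Type := (Z * Z)%type.

Definition pt_eqb (a b : pt) : bool := Z.eqb a.1 b.1 && Z.eqb a.2 b.2.

(* The six unit directions, listed in CLOCKWISE cyclic order
   (angles 0, -60, -120, 180, 120, 60 degrees); indices taken mod 6. *)
Definition dir (i : nat) : pt :=
  match i %% 6 with
  | 0 => (1, 0)%Z
  | 1 => (1, -1)%Z
  | 2 => (0, -1)%Z
  | 3 => (-1, 0)%Z
  | 4 => (-1, 1)%Z
  | _ => (0, 1)%Z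
  end.

Definition nbr (v : pt) (i : nat) : pt := ((v.1 + (dir i).1)%Z, (v.2 + (dir i).2)%Z).

Definition adj (u w : pt) : Prop := exists i, i < 6 /\ w = nbr u i.

Definition finite_set (A : pt -> Prop) : Prop :=
  exists l : seq pt, forall x, A x -> List.In x l.

Inductive conn (A : pt -> Prop) : pt -> pt -> Prop :=
| conn_refl x : A x -> conn A x x
| conn_step x y z : A x -> adj x y -> conn A y z -> conn A x z.

Definition connected (A : pt -> Prop) : Prop :=
  forall x y, A x -> A y -> conn A x y.

Definition pnorm (v : pt) : Z := (Z.abs v.1 + Z.abs v.2)%Z.

(* For the triangular grid, two grid points not in S lie in the same
   face of (the planar drawing of) S iff they are joined by a grid path
   avoiding S; the outer (unbounded) face thus contains exactly the grid
   points not in S from which one can walk, avoiding S, arbitrarily far. *)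
Definition outer_face (S : pt -> Prop) (v : pt) : Prop :=
  ~ S v /\ forall n : Z, exists w, (n <= pnorm w)%Z /\ conn (fun x => ~ S x) v w.

Definition hole_point (S : pt -> Prop) (v : pt) : Prop :=
  ~ S v /\ ~ outer_face S v.

Definition area (S : pt -> Prop) (v : pt) : Prop := S v \/ hole_point S v.

Definition simply_connected (S : pt -> Prop) : Prop :=
  finite_set S /\ connected S /\ forall v, ~ hole_point S v.

Definition outer_boundary (S : pt -> Prop) (v : pt) : Prop :=
  S v /\ exists i, i < 6 /\ outer_face S (nbr v i).

Definition boundary_point (S : pt -> Prop) (v : pt) : Prop :=
  S v /\ exists i, i < 6 /\ ~ S (nbr v i).

(* local boundary B of v: the maximal clockwise cyclic interval of edges
   at v in directions i, i+1, ..., i+k-1 (mod 6), all leading out of S;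
   |B| = k. *)
Definition local_boundary (S : pt -> Prop) (v : pt) (i k : nat) : Prop :=
  boundary_point S v /\ i < 6 /\ 0 < k <= 6 /\
  (forall j, j < k -> ~ S (nbr v (i + j))) /\
  (k < 6 -> S (nbr v (i + 5)) /\ S (nbr v (i + k))).

Definition boundary_count (k : nat) : Z := (Z.of_nat k - 2)%Z.

Definition redundant (S : pt -> Prop) (v : pt) : Prop :=
  connected (fun w => S w /\ adj v w).

Definition erodable (S : pt -> Prop) (v : pt) : Prop :=
  redundant S v /\ outer_boundary S v.

Definition SCE (S : pt -> Prop) (v : pt) : Prop :=
  erodable S v /\
  exists i k, local_boundary S v i k /\ (boundary_count k > 0)%Z.

Inductive status := Undecided | Leader | Follower.

(* State of one particle.  hd = head (the point if contracted);
   tl = Some t iff expanded with tail t.  Port j of the particle (at its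
   head) is the edge in global direction (ori + j) mod 6: all particles
   share clockwise chirality, only the offset ori is particle-specific.
   elig j (j < 6) is eligible[j]; term records termination. *)
Record pst := mkP {
  hd : pt; tl : option pt; ori : nat;
  stat : status; elig : nat -> bool; term : bool }.

Definition occupies (s : pst) (x : pt) : Prop := hd s = x \/ tl s = Some x.

Definition port_pt (s : pst) (j : nat) : pt := nbr (hd s) (ori s + j).

(* S_e is a ghost component of the configuration (the set of eligible points) *)
Record config (P : finType) := mkC { parts : P -> pst; Se : pt -> Prop }.

Definition upd (P : finType) (f : P -> pst) (p : P) (s : pst) : P -> pst :=
  fun q => if q == p then s else f q.

Definition set_contract (s : pst) : pst :=
  mkP (hd s) None (ori s) (stat s) (elig s) (term s).
Definition set_status (st : status) (s : pst) : pst :=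
  mkP (hd s) (tl s) (ori s) st (elig s) (term s).
Definition set_term (s : pst) : pst :=
  mkP (hd s) (tl s) (ori s) (stat s) (elig s) true.
Definition clear_elig (x : pt) (s : pst) : pst :=
  mkP (hd s) (tl s) (ori s) (stat s)
      (fun j => if (j < 6) && pt_eqb (port_pt s j) x then false else elig s j)
      (term s).
Definition expand_into (u v : pt) (s : pst) : pst :=
  mkP u (Some v) (ori s) (stat s)
      (fun j => ~~ pt_eqb (nbr u (ori s + j)) v) (term s).

Definition removed (S : pt -> Prop) (v : pt) : pt -> Prop := fun x => S x /\ x <> v.

Definition nbr_particle (P : finType) (C : config P) (p q : P) : Prop :=
  q <> p /\ exists x, occupies (parts C q) x /\ adj (hd (parts C p)) x.

Definition clear_others (P : finType) (C : config P) (p : P) (v : pt) : P -> pst :=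
  fun q => if q == p then parts C p else clear_elig v (parts C q).

Inductive activate (P : finType) (C : config P) (p : P) : config P -> Prop :=
| A_terminated :
    term (parts C p) = true -> activate C p C
| A_contract t :
    term (parts C p) = false -> tl (parts C p) = Some t ->
    activate C p (mkC (upd (parts C) p (set_contract (parts C p))) (Se C))
| A_terminate :
    term (parts C p) = false -> tl (parts C p) = None ->
    stat (parts C p) <> Undecided ->
    (forall q, nbr_particle C p q -> stat (parts C q) <> Undecided) ->
    activate C p (mkC (upd (parts C) p (set_term (parts C p))) (Se C))
| A_wait :
    term (parts C p) = false -> tl (parts C p) = None ->
    stat (parts C p) <> Undecided ->
    (exists q, nbr_particle C p q /\ stat (parts C q) = Undecided) ->
    activate C p C
| A_leader :
    term (parts C p) = false -> tl (parts C p) = None ->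
    stat (parts C p) = Undecided ->
    (forall j, j < 6 -> elig (parts C p) j = false) ->
    activate C p (mkC (upd (parts C) p (set_status Leader (parts C p))) (Se C))
| A_erode_expand u :
    term (parts C p) = false -> tl (parts C p) = None ->
    stat (parts C p) = Undecided ->
    (exists j, j < 6 /\ elig (parts C p) j = true) ->
    SCE (Se C) (hd (parts C p)) ->
    adj (hd (parts C p)) u -> removed (Se C) (hd (parts C p)) u ->
    (forall q, ~ occupies (parts C q) u) ->
    activate C p
      (mkC (upd (clear_others C p (hd (parts C p))) p
                (expand_into u (hd (parts C p)) (parts C p)))
           (removed (Se C) (hd (parts C p))))
| A_erode_follower :
    term (parts C p) = false -> tl (parts C p) = None ->
    stat (parts C p) = Undecided ->
    (exists j, j < 6 /\ elig (parts C p) j = true) ->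
    SCE (Se C) (hd (parts C p)) ->
    ~ (exists u, adj (hd (parts C p)) u /\ removed (Se C) (hd (parts C p)) u /\
                 forall q, ~ occupies (parts C q) u) ->
    activate C p
      (mkC (upd (clear_others C p (hd (parts C p))) p
                (set_status Follower (parts C p)))
           (removed (Se C) (hd (parts C p))))
| A_idle :
    term (parts C p) = false -> tl (parts C p) = None ->
    stat (parts C p) = Undecided ->
    (exists j, j < 6 /\ elig (parts C p) j = true) ->
    ~ SCE (Se C) (hd (parts C p)) ->
    activate C p C.

Definition occupied (P : finType) (C : config P) (x : pt) : Prop :=
  exists p, occupies (parts C p) x.

Definition permitted_initial (P : finType) (C : config P) : Prop :=
  (exists p : P, True) /\
  (forall p, tl (parts C p) = None) /\
  (forall p q, hd (parts C p) = hd (parts C q) -> p = q) /\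
  connected (occupied C) /\
  (forall p, stat (parts C p) = Undecided /\ term (parts C p) = false) /\
  (forall p j, j < 6 ->
     (elig (parts C p) j = true <-> ~ outer_face (occupied C) (port_pt (parts C p) j))) /\
  (forall x, Se C x <-> area (occupied C) x).

Definition execution (P : finType) (exec : nat -> config P) (sched : nat -> P) : Prop :=
  permitted_initial (exec 0) /\
  forall k, activate (exec k) (sched k) (exec k.+1).

Definition fair (P : finType) (sched : nat -> P) : Prop :=
  forall p k, exists k', k <= k' /\ sched k' = p.

Definition DLE_invariants (P : finType) (C : config P) : Prop :=
  (forall p t, tl (parts C p) = Some t -> Se C (hd (parts C p)) /\ ~ Se C t) /\
  (simply_connected (Se C) /\ exists x, Se C x) /\
  (forall x, boundary_point (Se C) x -> occupied C x) /\
  (forall p j, j < 6 ->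
     (elig (parts C p) j = true <-> Se C (port_pt (parts C p) j))).

(* Main.v *)
Require Import Defs.
From Stdlib Require Import ZArith Lia Classical FunctionalExtensionality PropExtensionality.
From mathcomp Require Import all_boot zify.
Set Implicit Arguments. Unset Strict Implicit.

Lemma dir_mod a : dir a = dir (a %% 6).
Proof. by rewrite /dir modn_mod. Qed.
Lemma nbr_mod v a : nbr v a = nbr v (a %% 6).
Proof. by rewrite /nbr -dir_mod. Qed.


Lemma nbr_L1 v a : nbr (nbr v (a+1)) (a+5) = nbr v a.
Proof.
rewrite /nbr (dir_mod (a+1)) (dir_mod (a+5)) (dir_mod a) -(modnDml a 1) -(modnDml a 5).
have : a %% 6 < 6 by rewrite ltn_pmod.
case: (a %% 6) => [|[|[|[|[|[|r]]]]]] //= _.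
all: case: v => x y /=; f_equal; lia.
Qed.
Lemma nbr_L2 v a : nbr (nbr v a) (a+2) = nbr v (a+1).
Proof.
rewrite /nbr (dir_mod (a+1)) (dir_mod (a+2)) (dir_mod a) -(modnDml a 1) -(modnDml a 2).
have : a %% 6 < 6 by rewrite ltn_pmod.
case: (a %% 6) => [|[|[|[|[|[|r]]]]]] //= _.
all: case: v => x y /=; f_equal; lia.
Qed.
Lemma nbr_back v a : nbr (nbr v a) (a+3) = v.
Proof.
rewrite /nbr (dir_mod (a+3)) (dir_mod a) -(modnDml a 3).
have : a %% 6 < 6 by rewrite ltn_pmod.
case: (a %% 6) => [|[|[|[|[|[|r]]]]]] //= _.
all: case: v => x y /=; f_equal; lia.
Qed.
Lemma nbr_neq v a : nbr v a <> v.
Proof.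
rewrite /nbr (dir_mod a).
have : a %% 6 < 6 by rewrite ltn_pmod.
case: (a %% 6) => [|[|[|[|[|[|r]]]]]] //= _; case: v => x y /= [] ?; lia.
Qed.

Lemma adj_sym u w : adj u w -> adj w u.
Proof.
move=> [i [Hi ->]]; exists ((i+3) %% 6); split; first by rewrite ltn_pmod.
by rewrite -nbr_mod nbr_back.
Qed.
Lemma adj_irrefl u : ~ adj u u.
Proof. move=> [i [_ H]]; exact: (nbr_neq (esym H)). Qed.

Lemma pt_eqbP a b : reflect (a = b) (pt_eqb a b).
Proof.
case: a b => [a1 a2] [b1 b2]; rewrite /pt_eqb /=.
apply: (iffP andP) => [[/Z.eqb_eq -> /Z.eqb_eq ->]|[-> ->]] //.
by split; apply Z.eqb_refl.
Qed.

Lemma conn_l A x y : conn A x y -> A x.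
Proof. by case. Qed.
Lemma conn_r A x y : conn A x y -> A y.
Proof. by elim. Qed.
Lemma conn_mono (A B : pt -> Prop) x y : (forall z, A z -> B z) -> conn A x y -> conn B x y.
Proof.
move=> H; elim=> [z Hz|a b c Ha Hab _ IH]; first by constructor; auto.
exact: (conn_step (H _ Ha) Hab IH).
Qed.
Lemma conn_trans A x y z : conn A x y -> conn A y z -> conn A x z.
Proof.
elim=> [//|a b c Ha Hab _ IH] H; exact: (conn_step Ha Hab (IH H)).
Qed.
Lemma conn_sym A x y : conn A x y -> conn A y x.
Proof.
elim=> [z Hz|a b c Ha Hab Hc IH]; first by constructor.
apply: (conn_trans IH); apply: (conn_step (conn_l Hc) (adj_sym Hab)); by constructor.
Qed.

Lemma outer_prepend S x y : ~ S x -> adj x y -> outer_face S y -> outer_face S x.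
Proof.
move=> Hx Hxy [Hy Ho]; split=> // n; have [w [Hw Hc]] := Ho n.
exists w; split=> //; exact: (conn_step Hx Hxy Hc).
Qed.
Lemma outer_mono (S S' : pt -> Prop) x : (forall z, S' z -> S z) -> outer_face S x -> outer_face S' x.
Proof.
move=> H [Hx Ho]; split; first by move=> /H.
move=> n; have [w [Hw Hc]] := Ho n; exists w; split=> //.
apply: conn_mono Hc => z Hz /H; exact: Hz.
Qed.

Lemma remove_conn S v : connected S -> redundant S v -> connected (removed S v).
Proof.
move=> HS Hr.
have key : forall x z, conn S x z ->
  (x <> v -> z <> v -> conn (removed S v) x z) /\
  (x = v -> z <> v -> exists w, (S w /\ adj v w) /\ conn (removed S v) w z).
{ move=> x z; elim=> [a Ha|a b c Ha Hab Hc [IH1 IH2]].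
  - split=> [H1 _|-> //]; constructor; split=> //.
  - have Hb := conn_l Hc.
    split.
    + move=> Hav Hcv; case: (classic (b = v)) => Hbv.
      * have [w [Hw Hwc]] := IH2 Hbv Hcv.
        have Na : S a /\ adj v a by split=> //; apply: adj_sym; rewrite -Hbv.
        apply: conn_trans Hwc; apply: conn_mono (Hr _ _ Na Hw).
        move=> t [Ht Hvz]; split=> // Hzv; apply: (adj_irrefl (u:=v)); by rewrite -{2}Hzv.
      * exact: (conn_step (conj Ha Hav) Hab (IH1 Hbv Hcv)).
    + move=> Hav Hcv; case: (classic (b = v)) => Hbv.
      * exact: IH2 Hbv Hcv.
      * exists b; split; [split=> //; by rewrite -Hav | exact: IH1 Hbv Hcv]. }
move=> x y [Hx Hxv] [Hy Hyv]; exact: (key x y (HS x y Hx Hy)).1 Hxv Hyv.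
Qed.

Lemma remove_nohole S v : (forall x, ~ hole_point S x) -> outer_boundary S v ->
  forall x, ~ hole_point (removed S v) x.
Proof.
move=> Hh [Sv [i [Hi Ho]]] x [Hx Hxo].
have sub : forall z, removed S v z -> S z by move=> z [].
case: (classic (x = v)) => Hxv.
- apply: Hxo; rewrite Hxv.
  apply: (outer_prepend (y := nbr v i)); first by move=> [].
  + by exists i.
  + exact: outer_mono sub Ho.
- have nSx : ~ S x by move=> Sx; apply: Hx.
  apply: (Hh x); split=> // Ho'; apply: Hxo; exact: outer_mono sub Ho'.
Qed.

Lemma remove_sc S v : simply_connected S -> redundant S v -> outer_boundary S v ->
  simply_connected (removed S v).
Proof.
move=> [[l Hl] [Hc Hh]] Hr Hob; split; last split.
- exists l => x [Hx _]; exact: Hl.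
- exact: remove_conn.
- exact: remove_nohole.
Qed.

Lemma middle0 (S : pt -> Prop) v i0 k d : local_boundary S v i0 k -> 3 <= k -> d < 6 -> S (nbr v d) ->
  (forall j, j < 6 -> S (nbr (nbr v d) j)) -> nbr v d = nbr v (i0 + 4).
Proof.
move=> [_ [Hi0 [Hk [H1 _]]]] Hk3 Hd Sd H2.
have H2' : forall j, S (nbr (nbr v d) j).
  by move=> j; rewrite (nbr_mod (nbr v d) j); apply: H2; rewrite ltn_pmod.
have Hm : (d + 6 - i0) %% 6 < 6 by rewrite ltn_pmod.
have Hdm : nbr v d = nbr v (i0 + (d + 6 - i0) %% 6).
{ rewrite (nbr_mod v d) (nbr_mod v (i0 + _)) modnDmr.
  have -> : i0 + (d + 6 - i0) = d + 6 by lia.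
  by rewrite modnDr. }
move: Hm Hdm; set m := (d + 6 - i0) %% 6 => Hm Hdm.
case: (ltnP m k) => Hmk.
- by exfalso; apply: (H1 m Hmk); rewrite -Hdm.
- case: (eqVneq m k) => Hmk'.
  + exfalso.
    have Hk1 : k - 1 < k by lia.
    apply: (H1 _ Hk1).
    have E : i0 + (k - 1) + 1 = i0 + m by lia.
    rewrite -(nbr_L1 v (i0 + (k-1))) E -Hdm; exact: H2'.
  + case: (eqVneq m 5) => Hm5.
    * exfalso.
      have H0 : 0 < k by lia.
      apply: (H1 0 H0).
      have E : nbr v (i0 + 0) = nbr v (i0 + 5 + 1).
      { have -> : i0 + 5 + 1 = i0 + 6 by lia.
        by rewrite addn0 (nbr_mod v (i0 + 6)) modnDr -nbr_mod. }
      have Hd5 : nbr v (i0 + 5) = nbr v d by rewrite Hdm Hm5.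
      rewrite E -nbr_L2 Hd5; exact: H2'.
    * have -> : 4 = m by lia.
      exact: Hdm.
Qed.

Lemma middle (S : pt -> Prop) v x y : SCE S v -> S x -> adj v x -> S y -> adj v y ->
  (forall j, j < 6 -> S (nbr x j)) -> (forall j, j < 6 -> S (nbr y j)) -> x = y.
Proof.
move=> [_ [i0 [k [Hlb Hc]]]] Sx [dx [Hdx Ex]] Sy [dy [Hdy Ey]] Hx Hy; subst x y.
have Hk3 : 3 <= k by rewrite /boundary_count in Hc; lia.
by rewrite (middle0 Hlb Hk3 Hdx Sx Hx) (middle0 Hlb Hk3 Hdy Sy Hy).
Qed.

Lemma interior (S : pt -> Prop) x : S x -> ~ boundary_point S x -> forall j, j < 6 -> S (nbr x j).
Proof. move=> Sx Hb j Hj; apply: NNPP => Hn; apply: Hb; split=> //; by exists j. Qed.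

Definition excl (P : finType) (C : config P) : Prop :=
  forall p q x, occupies (parts C p) x -> occupies (parts C q) x -> p = q.
Definition Inv (P : finType) (C : config P) : Prop := DLE_invariants C /\ excl C.

Lemma inv_same (P : finType) (C : config P) (f : P -> pst) : Inv C ->
  (forall q, hd (f q) = hd (parts C q) /\ ori (f q) = ori (parts C q) /\
             elig (f q) = elig (parts C q) /\ (tl (f q) = tl (parts C q) \/ tl (f q) = None)) ->
  Inv (mkC f (Se C)).
Proof.
move=> [[I1 [I2 [I3 I4]]] Iex] Hf.
have occ_sub : forall q x, occupies (f q) x -> occupies (parts C q) x.
{ move=> q x; have [Hh [_ [_ Ht]]] := Hf q; rewrite /occupies Hh.
  case: Ht => ->; first done.
  move=> [H|H]; [by left | discriminate]. }
split; [split; [|split; [exact I2|split]] |].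
- move=> q t /=; have [Hh [_ [_ Ht]]] := Hf q; rewrite Hh; case: Ht => -> Ht'; [exact: I1 Ht' | discriminate].
- move=> x /= Hb; have [q Hq] := I3 x Hb; exists q.
  have [Hh [_ [_ Ht]]] := Hf q.
  case: Hq => Hq; first by left; rewrite Hh.
  by exfalso; have [_ H] := I1 q x Hq; apply: H; case: Hb.
- move=> q j Hj /=; have [Hh [Ho [He _]]] := Hf q; rewrite /port_pt Hh Ho He; exact: I4.
- move=> p q x /occ_sub H1 /occ_sub H2; exact: Iex H1 H2.
Qed.

Lemma upd_same (P : finType) (C : config P) p s : Inv C ->
  hd s = hd (parts C p) -> ori s = ori (parts C p) -> elig s = elig (parts C p) ->
  (tl s = tl (parts C p) \/ tl s = None) -> Inv (mkC (upd (parts C) p s) (Se C)).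
Proof.
move=> HI H1 H2 H3 H4; apply: (inv_same (f := upd (parts C) p s) HI) => q; rewrite /upd; case: eqP => [->|_].
- by split; [|split; [|split]].
- by split; [|split; [|split]]; auto.
Qed.

Lemma erode_expand (P : finType) (C : config P) p u v :
  Inv C -> hd (parts C p) = v -> tl (parts C p) = None -> SCE (Se C) v ->
  adj v u -> removed (Se C) v u -> (forall q, ~ occupies (parts C q) u) ->
  Inv (mkC (upd (clear_others C p v) p (expand_into u v (parts C p))) (removed (Se C) v)).
Proof.
move=> [[I1 [[Isc Ine] [I3 I4]]] Iex] Hv Htl Hsce Huv [Su Huv'] Hfree.
set f := upd _ _ _.
have Fp : f p = expand_into u v (parts C p) by rewrite /f /upd eqxx.
have Fq : forall q, q != p -> f q = clear_elig v (parts C q).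
  by move=> q Hq; rewrite /f /upd /clear_others (negbTE Hq).
have occp : forall x, occupies (parts C p) x -> x = v.
  by move=> x [H|H]; [rewrite -H Hv | rewrite Htl in H].
have intu : forall j, j < 6 -> Se C (nbr u j).
  by apply: interior Su _ => Hb; have [q Hq] := I3 u Hb; exact: Hfree q Hq.
have intu' : forall j, Se C (nbr u j).
  by move=> j; rewrite nbr_mod; apply: intu; rewrite ltn_pmod.
have occ_tr : forall x, occupied C x -> x <> v -> occupied (mkC f (removed (Se C) v)) x.
{ move=> x [q Hq] Hxv; exists q; rewrite /=; case: (eqVneq q p) => [Eq|Hqp].
  - by exfalso; apply: Hxv; apply: occp; rewrite -Eq.
  - by rewrite Fq. }
have occf : forall q x, occupies (f q) x ->
    (q = p /\ (x = u \/ x = v)) \/ (q != p /\ occupies (parts C q) x).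
{ move=> q x; case: (eqVneq q p) => [->|Hqp].
  - rewrite Fp /occupies /= => [[<-|[<-]]]; left; auto.
  - rewrite Fq // => H; right; auto. }
split; [split; [|split; [split|split]]|].
- move=> q t /=; case: (eqVneq q p) => [->|Hqp].
  + rewrite Fp /= => [[<-]]; split; [by split | by case].
  + rewrite Fq //= => Ht; have [H1 H2] := I1 q t Ht; split; last by case.
    split=> // Hq; move/eqP: Hqp; apply; apply: (Iex q p v); left; [exact Hq | exact Hv].
- exact: remove_sc Isc Hsce.1.1 Hsce.1.2.
- by exists u.
- move=> x [[Sx Hxv] [i [Hi Hni]]].
  case: (classic (Se C (nbr x i))) => Hs.
  + have Heq : nbr x i = v by apply: NNPP => Hne; apply: Hni.
    have Hvx : adj v x.
      by exists ((i+3) %% 6); split; [rewrite ltn_pmod | rewrite -nbr_mod -Heq nbr_back].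
    case: (classic (occupied C x)) => Hox; first exact: occ_tr.
    exists p; left; rewrite /= Fp /=.
    apply: (middle Hsce Su Huv Sx Hvx intu); apply: interior Sx _ => Hb; exact: Hox (I3 x Hb).
  + apply: occ_tr Hxv; apply: I3; split=> //; by exists i.
- move=> q j Hj /=; case: (eqVneq q p) => [->|Hqp].
  + rewrite Fp /port_pt /=.
    case: pt_eqbP => [E|NE] /=; split=> //; try (by case=> _ /(_ E)).
    all: try (by move=> _; split; [apply: intu' | exact NE]).
  + rewrite Fq // /port_pt /= Hj /=.
    case: pt_eqbP => [E|NE].
    * by split=> //; case=> _ /(_ E).
    * rewrite (I4 q j Hj) /port_pt; split; [by move=> H; split | by case].
- move=> q1 q2 x /occf [[-> Hx]|[Hq1 H1]] /occf [[-> Hx']|[Hq2 H2]] //.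
  + case: Hx => Ex; subst x; first by exfalso; exact: Hfree q2 H2.
    apply: (Iex p q2 v) => //; by left.
  + case: Hx' => Ex; subst x; first by exfalso; exact: Hfree q1 H1.
    apply: (Iex q1 p v) => //; by left.
  + exact: Iex H1 H2.
Qed.

Lemma erode_follow (P : finType) (C : config P) p v :
  Inv C -> hd (parts C p) = v -> tl (parts C p) = None -> SCE (Se C) v ->
  (exists j, j < 6 /\ elig (parts C p) j = true) ->
  ~ (exists u, adj v u /\ removed (Se C) v u /\ forall q, ~ occupies (parts C q) u) ->
  Inv (mkC (upd (clear_others C p v) p (set_status Follower (parts C p))) (removed (Se C) v)).
Proof.
move=> [[I1 [[Isc Ine] [I3 I4]]] Iex] Hv Htl Hsce [j0 [Hj0 He0]] Hno.
set f := upd _ _ _.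
have Fp : f p = set_status Follower (parts C p) by rewrite /f /upd eqxx.
have Fq : forall q, q != p -> f q = clear_elig v (parts C q).
  by move=> q Hq; rewrite /f /upd /clear_others (negbTE Hq).
have occ_eq : forall q x, occupies (f q) x <-> occupies (parts C q) x.
  by move=> q x; case: (eqVneq q p) => [->|Hqp]; [rewrite Fp | rewrite Fq //]; exact: iff_refl.
have hd_eq : forall q, hd (f q) = hd (parts C q).
  by move=> q; case: (eqVneq q p) => [->|Hqp]; [rewrite Fp | rewrite Fq].
have tl_eq : forall q, tl (f q) = tl (parts C q).
  by move=> q; case: (eqVneq q p) => [->|Hqp]; [rewrite Fp | rewrite Fq].
have occ_tr : forall x, occupied C x -> occupied (mkC f (removed (Se C) v)) x.
  by move=> x [q Hq]; exists q; apply/occ_eq.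
split; [split; [|split; [split|split]]|].
- move=> q t /=; rewrite tl_eq hd_eq => Ht; have [H1 H2] := I1 q t Ht; split; last by case.
  split=> // Hq; have Eq : q = p by apply: (Iex q p v); left; [exact Hq | exact Hv].
  by move: Ht; rewrite Eq Htl.
- exact: remove_sc Isc Hsce.1.1 Hsce.1.2.
- exists (port_pt (parts C p) j0); split; first by apply/I4.
  by rewrite /port_pt Hv; apply: nbr_neq.
- move=> x [[Sx Hxv] [i [Hi Hni]]]; apply: occ_tr.
  case: (classic (Se C (nbr x i))) => Hs.
  + have Heq : nbr x i = v by apply: NNPP => Hne; apply: Hni.
    have Hvx : adj v x.
      by exists ((i+3) %% 6); split; [rewrite ltn_pmod | rewrite -nbr_mod -Heq nbr_back].
    apply: NNPP => Hox; apply: Hno; exists x; split=> //; split=> //.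
    by move=> q Hq; apply: Hox; exists q.
  + apply: I3; split=> //; by exists i.
- move=> q j Hj /=; case: (eqVneq q p) => [->|Hqp].
  + rewrite Fp /port_pt /= (I4 p j Hj) /port_pt Hv; split; last by case.
    by move=> H; split=> //; apply: nbr_neq.
  + rewrite Fq // /port_pt /= Hj /=.
    case: pt_eqbP => [E|NE].
    * by split=> //; case=> _ /(_ E).
    * rewrite (I4 q j Hj) /port_pt; split; [by move=> H; split | by case].
- by move=> q1 q2 x /occ_eq H1 /occ_eq H2; exact: Iex H1 H2.
Qed.

Lemma step_inv (P : finType) (C C' : config P) p : Inv C -> activate C p C' -> Inv C'.
Proof.
move=> HI; case.
- done.
- move=> t _ _; apply: (upd_same (s := set_contract (parts C p)) HI) => //; by right.
- move=> _ _ _ _; apply: (upd_same (s := set_term (parts C p)) HI) => //; by left.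
- done.
- move=> _ _ _ _; apply: (upd_same (s := set_status Leader (parts C p)) HI) => //; by left.
- move=> u _ Htl _ _ Hsce Hadj Hrem Hfree; exact: erode_expand HI erefl Htl Hsce Hadj Hrem Hfree.
- move=> _ Htl _ Hel Hsce Hno; exact: erode_follow HI erefl Htl Hsce Hel Hno.
- done.
Qed.

Definition st (v : pt) : pt := if (0 <=? v.1)%Z then nbr v 0 else nbr v 3.
Lemma st_adj v : adj v (st v).
Proof. rewrite /st; case: Z.leb; [exists 0 | exists 3]; done. Qed.
Lemma st_norm v : pnorm (st v) = (pnorm v + 1)%Z.
Proof. case: v => a b; rewrite /st /pnorm /nbr /=; case: (Z.leb_spec 0 a) => H /=; lia. Qed.

Lemma walk_conn (O : pt -> Prop) M : (forall x, O x -> (pnorm x <= M)%Z) ->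
  forall n v, (M < pnorm v)%Z -> conn (fun x => ~ O x) v (iter n st v).
Proof.
move=> HM; elim=> [|n IH] v Hv.
- by apply: conn_refl => /HM; lia.
- rewrite iterSr; apply: (conn_step _ (st_adj v)); first by move=> /HM; lia.
  apply: IH; rewrite st_norm; lia.
Qed.
Lemma iter_norm n v : pnorm (iter n st v) = (pnorm v + Z.of_nat n)%Z.
Proof. elim: n => [|n IH] /=; [lia | rewrite st_norm IH; lia]. Qed.
Lemma far_outer (O : pt -> Prop) M v : (forall x, O x -> (pnorm x <= M)%Z) -> (M < pnorm v)%Z -> outer_face O v.
Proof.
move=> HM Hv; split; first by move=> /HM; lia.
move=> n; exists (iter (Z.to_nat (n - pnorm v)) st v); split; last by eapply walk_conn; [exact HM | exact Hv].
rewrite iter_norm; lia.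
Qed.

Lemma list_bound (l : list pt) : exists M, forall x, List.In x l -> (pnorm x <= M)%Z.
Proof.
elim: l => [|a l [M HM]]; first by exists 0%Z.
exists (Z.max (pnorm a) M) => x /= [<-|/HM]; lia.
Qed.
Lemma In_mem (T : eqType) (x : T) (s : seq T) : x \in s -> List.In x s.
Proof.
elim: s => //= a s IH; rewrite in_cons => /orP [/eqP ->|/IH]; auto.
Qed.
Lemma occ_bound (P : finType) (C : config P) : exists M, forall x, occupied C x -> (pnorm x <= M)%Z.
Proof.
have [M HM] := list_bound (List.flat_map (fun p => hd (parts C p) ::
   (if tl (parts C p) is Some t then [:: t] else [::])) (enum P)).
exists M => x [p Hp]; apply: HM; apply/List.in_flat_map; exists p; split.
- by apply: In_mem; rewrite mem_enum.
- by case: Hp => [<-|->]; [left | right; left].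
Qed.
Lemma box_finite (M : Z) : exists l : seq pt, forall x, (pnorm x <= M)%Z -> List.In x l.
Proof.
set zr := List.map (fun n => (Z.of_nat n - M)%Z) (List.seq 0 (Z.to_nat (2*M+1))).
have Hzr : forall a, (Z.abs a <= M)%Z -> List.In a zr.
{ move=> a Ha; apply/List.in_map_iff; exists (Z.to_nat (a + M)); split; first lia.
  apply/List.in_seq; lia. }
exists (List.list_prod zr zr) => [[a b]] /= H; rewrite /pnorm /= in H.
apply: List.in_prod; apply: Hzr; lia.
Qed.

Lemma hole_reach (O : pt -> Prop) M : (forall x, O x -> (pnorm x <= M)%Z) ->
  forall n h, hole_point O h -> (M < pnorm h + Z.of_nat n)%Z -> exists o, O o /\ conn (area O) h o.
Proof.
move=> HM; elim=> [|n IH] h [Hh Hno] Hn.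
- exfalso; apply: Hno; apply: far_outer HM _; lia.
- case: (classic (O (st h))) => Hs.
  + exists (st h); split=> //; apply: (conn_step _ (st_adj h)); [by right | by constructor; left].
  + have Hhs : hole_point O (st h).
      by split=> // Ho; apply: Hno; exact: outer_prepend Hh (st_adj h) Ho.
    have [o [Ho Hc]] := IH (st h) Hhs ltac:(rewrite st_norm; lia).
    exists o; split=> //; exact: conn_step (or_intror (conj Hh Hno)) (st_adj h) Hc.
Qed.

Lemma area_connected (O : pt -> Prop) M : connected O -> (forall x, O x -> (pnorm x <= M)%Z) ->
  connected (area O).
Proof.
move=> HO HM.
have to_occ : forall x, area O x -> exists o, O o /\ conn (area O) x o.
{ move=> x [Ox|Hx]; first by exists x; split=> //; constructor; left.
  eapply (hole_reach HM) with (n := Z.to_nat (M + 1 - pnorm x)); [exact Hx | lia]. }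
move=> x y Hx Hy; have [ox [Ox Hcx]] := to_occ x Hx; have [oy [Oy Hcy]] := to_occ y Hy.
apply: conn_trans Hcx _; apply: conn_trans (conn_sym Hcy).
by apply: conn_mono (HO ox oy Ox Oy) => z Hz; left.
Qed.

Lemma outer_not_area (O : pt -> Prop) x : outer_face O x -> ~ area O x.
Proof. move=> Ho [Ox|[_ Hno]]; [exact: Ho.1 Ox | exact: Hno Ho]. Qed.
Lemma conn_avoid (O : pt -> Prop) x w : outer_face O x -> conn (fun z => ~ O z) x w ->
  conn (fun z => ~ area O z) x w.
Proof.
move=> Ho Hc; elim: Hc Ho => [z Hz|a b c Ha Hab Hc IH] Ho.
- constructor; exact: outer_not_area Ho.
- apply: (conn_step (outer_not_area Ho) Hab); apply: IH.
  exact: outer_prepend (conn_l Hc) (adj_sym Hab) Ho.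
Qed.
Lemma area_nohole (O : pt -> Prop) v : ~ hole_point (area O) v.
Proof.
move=> [Hna Hno]; apply: Hno.
case: (classic (outer_face O v)) => Ho; last first.
{ exfalso; apply: Hna; case: (classic (O v)) => Ov; [by left | by right]. }
split=> // n; have [w [Hw Hc]] := Ho.2 n; exists w; split=> //; exact: conn_avoid Ho Hc.
Qed.

Lemma init_inv (P : finType) (C : config P) : permitted_initial C -> Inv C.
Proof.
move=> [[p0 _] [Htl [Hinj [Hconn [Hst [Helig HSe]]]]]].
have E : Se C = area (occupied C).
{ apply: functional_extensionality => x; apply: propositional_extensionality; exact: HSe. }
have [M HM] := occ_bound C.
have Harea : forall x, area (occupied C) x -> (pnorm x <= M)%Z.
{ move=> x [/HM //|[_ Hno]]; case: (Z.le_gt_cases (pnorm x) M) => // H.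
  by exfalso; exact: Hno (far_outer HM H). }
split; [split; [|split; [split|split]]|].
- by move=> p t; rewrite Htl.
- rewrite E; split; [|split].
  + have [l Hl] := box_finite M; exists l => x /Harea; exact: Hl.
  + exact: area_connected Hconn HM.
  + exact: area_nohole.
- exists (hd (parts C p0)); rewrite E; left; exists p0; by left.
- move=> x; rewrite E => -[HA [i [Hi Hn]]]; case: HA => [Ox|Hx]; first done.
  exfalso; apply: (proj2 Hx); apply: (outer_prepend (proj1 Hx)); first by exists i.
  apply: NNPP => Hno; apply Hn; right; split=> // Oy; apply Hn; by left.
- move=> p j Hj; rewrite (Helig p j Hj) E; split.
  + move=> Hno; case: (classic (occupied C (port_pt (parts C p) j))) => Ov; [by left | by right].
  + by move=> Ha Ho; exact: outer_not_area Ho Ha.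
- move=> p q x; rewrite /occupies !Htl => [[Hp|Hp]]; last discriminate.
  move=> [Hq|Hq]; last discriminate.
  by apply: Hinj; rewrite Hp Hq.
Qed.

Theorem lemma4p2 (P : finType) (exec : nat -> config P) (sched : nat -> P) :
  execution exec sched -> fair sched ->
  forall k, DLE_invariants (exec k).
Proof.
move=> [H0 Hstep] _ k; suff: Inv (exec k) by case.
elim: k => [|k IH]; [exact: init_inv | exact: step_inv IH (Hstep k)].
Qed.
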